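(* Consider the 2D patch scheme: $N_x\times N_y$ patches indexed $(I,J)$ on a doubly periodic macroscale lattice, each with interior points $(i,j)$, $i=1,\dots,n_x$, $j=1,\dots,n_y$, and interior values evolving by $$\partial_tu^{I,J}_{i,j}=\big[\kappa^{I,J}_{i+\frac12,j}(u^{I,J}_{i+1,j}-u^{I,J}_{i,j})+\kappa^{I,J}_{i-\frac12,j}(u^{I,J}_{i-1,j}-u^{I,J}_{i,j})\big]/d_x^2+\big[\kappa^{I,J}_{i,j+\frac12}(u^{I,J}_{i,j+1}-u^{I,J}_{i,j})+\kappa^{I,J}_{i,j-\frac12}(u^{I,J}_{i,j-1}-u^{I,J}_{i,j})\big]/d_y^2,$$ with real diffusivities satisfying $\kappa^{I,J}_{1/2,j}=\kappa^{K,J}_{n_x+1/2,j}$ for all $I,K,J,j$ and $\kappa^{I,J}_{i,1/2}=\kappa^{I,K}_{i,n_y+1/2}$ for all $I,J,K,i$. Edge values are given by $$u^{I,J}_{0,j}=\sum_K\mathcal I^{IK}_{1n_x}u^{K,J}_{n_x,j},\quad u^{I,J}_{n_x+1,j}=\sum_K\mathcal I^{IK}_{n_x1}u^{K,J}_{1,j}\ (j=1,\dots,n_y),$$ $$u^{I,J}_{i,0}=\sum_K\mathcal J^{JK}_{1n_y}u^{I,K}_{i,n_y},\quad u^{I,J}_{i,n_y+1}=\sum_K\mathcal J^{JK}_{n_y1}u^{I,K}_{i,1}\ (i=1,\dots,n_x),$$ where $\mathcal I$ are the 1D spectral or Lagrangian interpolation coefficients in $x$ (with $N_x$ patches and ratio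 $r_x=h_x/H_x$) and $\mathcal J$ those in $y$ (with $N_y$ patches and ratio $r_y=h_y/H_y$). Then the linear system $\partial_t\mathbf u=\mathcal L\mathbf u$ on all interior values has a real symmetric (self-adjoint) matrix $\mathcal L$.
   Context: 1D spectral interpolation coefficients (for $N$ patches, spacing $H$, ratio $r$, domain length $L=NH$): $\mathcal I^{IJ}_{n1}=\frac1N\sum_{k\in\mathcal K}e^{\mathrm ikH(I-J+r)}$, $\mathcal I^{IJ}_{1n}=\frac1N\sum_{k\in\mathcal K}e^{\mathrm ikH(I-J-r)}$, $\mathcal K$ a fixed finite symmetric set of integer multiples of $2\pi/L$. 1D Lagrangian interpolation coefficients of order $P$: defined by $u^I_{n+1}=u^I_1+\sum_{k=1}^P\big(\prod_{\ell=0}^{k-1}(r^2-\ell^2)\big)\frac{(2k/r)\mu\delta^{2k-1}+\delta^{2k}}{(2k)!}u^I_1=\sum_J\mathcal I^{IJ}_{n1}u^J_1$ and $u^I_{0}=u^I_n+\sum_{k=1}^P\big(\prod_{\ell=0}^{k-1}(r^2-\ell^2)\big)\frac{-(2k/r)\mu\delta^{2k-1}+\delta^{2k}}{(2k)!}u^I_n=\sum_J\mathcal I^{IJ}_{1n}u^J_n$, where $Eu^I=u^{I+1}$ cyclically, $\mu\delta^{2k-1}:=\tfrac12(E-E^{-1})(E-2+E^{-1})^{k-1}$, $\delta^{2k}:=(E-2+E^{-1})^k$. Patch widths $h_x=n_xd_x$, $h_y=n_yd_y$. *)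

(* Defs.v *)
From HB Require Import structures.
From mathcomp Require Import all_boot all_order all_algebra.
From mathcomp Require Import reals trigo.
From mathcomp Require Import complex.
Set Implicit Arguments. Unset Strict Implicit. Unset Printing Implicit Defensive.
Import Order.TTheory GRing.Theory Num.Theory.
Local Open Scope ring_scope.

Definition toC (R : rcfType) (x : R) : R[i] := Complex x 0.

Definition cexpi (R : realType) (t : R) : R[i] := Complex (cos t) (sin t).

(* choice of 1D interpolation scheme:
   - Spectral s : the wavenumber set K = { m * 2 pi / L | m \in s }, s : seq int
   - Lagrange P : Lagrangian interpolation of order P *)
Inductive interp := Spectral of seq int | Lagrange of nat.

Definition interp_ok (m : interp) : Prop :=
  match m with
  | Spectral s => uniq s /\ (forall k, k \in s -> - k \in s)
  | Lagrange _ => True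
  end.

(* Spectral coefficients, N patches, spacing H, ratio r, L = N H.
   sgn = 1 gives I_{n1}, sgn = -1 gives I_{1n}:
   (1/N) sum_{k in K} exp(i k H (I - J + sgn r)) *)
Definition spec_coef (R : realType) (N : nat) (H r : R) (s : seq int) (sgn : R)
    (I J : 'I_N) : R[i] :=
  (N%:R : R[i])^-1 *
  \sum_(m <- s) cexpi ((m%:~R * (2 * pi / (N%:R * H))) * H
                          * ((I : nat)%:R - (J : nat)%:R + sgn * r)).

(* cyclic shift E : (E u)^I = u^{I+1} (indices mod N) *)
Definition shiftE (R : pzRingType) (N : nat) : 'M[R]_N :=
  \matrix_(I < N, J < N) (((J : nat) == (I.+1 %% N)%N)%:R).

Definition delta2 (R : fieldType) (N : nat) : 'M[R]_N :=
  shiftE R N - 2%:M + invmx (shiftE R N).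

(* mu delta^{2k-1} = 1/2 (E - E^{-1}) (E - 2 + E^{-1})^{k-1} *)
Definition mudelta (R : fieldType) (N k : nat) : 'M[R]_N :=
  (2^-1 : R) *: ((shiftE R N - invmx (shiftE R N)) *m (delta2 R N) ^+ k.-1).

Definition deltaev (R : fieldType) (N k : nat) : 'M[R]_N := (delta2 R N) ^+ k.

Definition lag_prod (R : fieldType) (r : R) (k : nat) : R :=
  \prod_(l < k) (r ^+ 2 - (l : nat)%:R ^+ 2).

Definition lag_mx (R : fieldType) (N P : nat) (r sgn : R) : 'M[R]_N :=
  1%:M + \sum_(1 <= k < P.+1)
    ((lag_prod r k) / ((2 * k)`!)%:R) *:
      ((sgn * (2 * k)%:R / r) *: mudelta R N k + deltaev R N k).

(* the interpolation coefficients I^{IJ}_{n1} (sgn = 1) / I^{IJ}_{1n} (sgn = -1) *)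
Definition icoef (R : realType) (m : interp) (N : nat) (H r sgn : R)
    (I J : 'I_N) : R[i] :=
  match m with
  | Spectral s => spec_coef H r s sgn I J
  | Lagrange P => toC (lag_mx N P r sgn I J)
  end.

(* index of an interior value u^{I,J}_{i,j}: (I, J, i-1, j-1) *)
Definition pidx (Nx Ny nx ny : nat) := ('I_Nx * 'I_Ny * 'I_nx * 'I_ny)%type.

Section Scheme.
Variables (R : realType) (Nx Ny nx ny : nat) (dx dy Hx Hy : R)
  (mx my : interp)
  (* kx I J i j = kappa^{I,J}_{i+1/2, j}  (i = 0..nx, j = 1..ny)
     ky I J i j = kappa^{I,J}_{i, j+1/2}  (i = 1..nx, j = 0..ny) *)
  (kx ky : 'I_Nx -> 'I_Ny -> nat -> nat -> R).

Definition rx : R := (nx%:R * dx) / Hx.   (* h_x / H_x, h_x = n_x d_x *)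
Definition ry : R := (ny%:R * dy) / Hy.

(* interior value u^{I,J}_{i,j} for 1 <= i <= nx, 1 <= j <= ny (else 0) *)
Definition uval (u : pidx Nx Ny nx ny -> R[i]) (I : 'I_Nx) (J : 'I_Ny)
    (i j : nat) : R[i] :=
  if (0 < i)%N && (0 < j)%N then
    match (insub i.-1 : option 'I_nx), (insub j.-1 : option 'I_ny) with
    | Some a, Some b => u (I, J, a, b)
    | _, _ => 0
    end
  else 0.

Definition uext (u : pidx Nx Ny nx ny -> R[i]) (I : 'I_Nx) (J : 'I_Ny)
    (i j : nat) : R[i] :=
  if (i == 0%N) && (0 < j <= ny)%N then
    \sum_(K < Nx) icoef mx Hx rx (-1) I K * uval u K J nx j
  else if (i == nx.+1) && (0 < j <= ny)%N then
    \sum_(K < Nx) icoef mx Hx rx 1 I K * uval u K J 1 j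
  else if (j == 0%N) && (0 < i <= nx)%N then
    \sum_(K < Ny) icoef my Hy ry (-1) J K * uval u I K i ny
  else if (j == ny.+1) && (0 < i <= nx)%N then
    \sum_(K < Ny) icoef my Hy ry 1 J K * uval u I K i 1
  else uval u I J i j.

Definition patch_rhs (u : pidx Nx Ny nx ny -> R[i]) (t : pidx Nx Ny nx ny)
    : R[i] :=
  let I : 'I_Nx := t.1.1.1 in
  let J : 'I_Ny := t.1.1.2 in
  let i := (t.1.2 : nat).+1 in
  let j := (t.2 : nat).+1 in
  let e := uext u I J in
  (toC (kx I J i j) * (e i.+1 j - e i j)
     + toC (kx I J i.-1 j) * (e i.-1 j - e i j)) / toC (dx ^+ 2)
  + (toC (ky I J i j) * (e i j.+1 - e i j)
     + toC (ky I J i j.-1) * (e i j.-1 - e i j)) / toC (dy ^+ 2).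

End Scheme.

(* Main.v *)
Require Import Defs.
From HB Require Import structures.
From mathcomp Require Import all_boot all_order all_algebra all_fingroup.
From mathcomp Require Import reals trigo.
From mathcomp Require Import complex.
From mathcomp Require Import ring lra zify.
Import Order.TTheory GRing.Theory Num.Theory.
Local Open Scope ring_scope.

Module CoefM.
Local Open Scope complex_scope.
Section Coef.
Variable R : realType.

Definition isr (z : R[i]) := exists r : R, z = r%:C.
Arguments isr : clear implicits.

Lemma perm_oppz (s : seq int) : uniq s -> (forall k, k \in s -> - k \in s) ->
  perm_eq s (map (fun k => - k) s).
Proof.
move=> us cs; apply: uniq_perm => //.
  by rewrite map_inj_uniq //; exact: oppr_inj.
move=> x; rewrite -[x in RHS]opprK mem_map; last exact: oppr_inj.
apply/idP/idP => [/cs //|/cs]; by rewrite opprK.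
Qed.

Lemma sum_neg (V : nmodType) (s : seq int) (F : int -> V) : uniq s -> (forall k, k \in s -> - k \in s) ->
  \sum_(m <- s) F m = \sum_(m <- s) F (- m).
Proof.
move=> us cs; by rewrite (perm_big _ (perm_oppz _ us cs)) big_map.
Qed.

Lemma spec_sym N (H r : R) s (I K : 'I_N) : uniq s -> (forall k, k \in s -> - k \in s) ->
  spec_coef H r s (-1) I K = spec_coef H r s 1 K I.
Proof.
move=> us cs; rewrite /spec_coef; congr (_ * _).
rewrite (sum_neg _ _ _ us cs); apply: eq_bigr => m _; congr cexpi.
rewrite intrN; ring.
Qed.

Lemma spec_real N (H r sgn : R) s (I K : 'I_N) : uniq s -> (forall k, k \in s -> - k \in s) ->
  isr (spec_coef H r s sgn I K).
Proof.
move=> us cs; rewrite /spec_coef.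
set z := \sum_(m <- s) _.
have hIm : complex.Im z = 0.
  have e1 : complex.Im z = \sum_(m <- s) sin ((m%:~R * (2 * pi / (N%:R * H))) * H
                          * ((I : nat)%:R - (K : nat)%:R + sgn * r)).
    by rewrite /z raddf_sum.
  have e2 : complex.Im z = - complex.Im z.
    rewrite [in RHS]e1 -sumrN e1 (@sum_neg _ s (fun m => sin ((m%:~R * (2 * pi / (N%:R * H))) * H
                          * ((I : nat)%:R - (K : nat)%:R + sgn * r))) us cs).
    apply: eq_bigr => m _; rewrite -sinN; congr sin; rewrite intrN; ring.
  lra.
exists ((N%:R)^-1 * complex.Re z).
rewrite rmorphM fmorphV rmorph_nat; congr (_ * _).
by case: z hIm => a b /= ->.
Qed.
End Coef.
Arguments isr {R} z.

End CoefM.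
Import CoefM.

Section Mat.
Variables (F : fieldType) (N : nat).

Definition sperm : 'S_N := perm (@ordS_inj N).

Lemma shiftE_perm : shiftE F N = perm_mx sperm.
Proof.
apply/matrixP => i j; rewrite /shiftE /perm_mx /row_perm.
rewrite !mxE.
by rewrite /sperm permE eq_sym.
Qed.

Lemma inv_shiftE : invmx (shiftE F N) = (shiftE F N)^T.
Proof.
have h : shiftE F N *m (shiftE F N)^T = 1%:M.
  by rewrite shiftE_perm tr_perm_mx -perm_mxM mulgV perm_mx1.
have [u _] := mulmx1_unit h.
by rewrite -[LHS]mulmx1 -h mulmxA mulVmx // mul1mx.
Qed.

Lemma trmxX (A : 'M[F]_N) k : (A ^+ k)^T = (A^T) ^+ k.
Proof.
elim: k => [|k IH]; first by rewrite !expr0; exact: trmx1.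
by rewrite [A ^+ _.+1]exprS -mulmxE trmx_mul IH mulmxE -exprSr.
Qed.
End Mat.

Section Lag.
Variables (F : fieldType) (N : nat).
Local Notation E := (shiftE F N).

Lemma ET1 : E * E^T = 1.
Proof. by rewrite -mulmxE shiftE_perm tr_perm_mx -perm_mxM mulgV perm_mx1. Qed.
Lemma TE1 : E^T * E = 1.
Proof. by rewrite -mulmxE shiftE_perm tr_perm_mx -perm_mxM mulVg perm_mx1. Qed.

Lemma commET : GRing.comm E E^T.
Proof. by rewrite /GRing.comm ET1 TE1. Qed.

Lemma comm_sc (A : 'M[F]_N) (a : F) : GRing.comm A a%:M.
Proof. by rewrite /GRing.comm -!mulmxE scalar_mxC. Qed.

Lemma delta2_tr : (delta2 F N)^T = delta2 F N.
Proof.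
rewrite /delta2 inv_shiftE linearD linearB /= tr_scalar_mx trmxK.
by rewrite [LHS]addrC -[RHS]addrA [in RHS](addrC (- _)).
Qed.

Lemma comm_md : GRing.comm (E - E^T) (delta2 F N).
Proof.
rewrite /delta2 inv_shiftE.
apply: commrD; last first.
  apply: commr_sym; apply: commrB; [exact: commr_sym commET| exact: commr_refl].
apply: commrB; last exact: comm_sc.
apply: commr_sym; apply: commrB; [exact: commr_refl| exact: commET].
Qed.

Lemma mudelta_tr k : (mudelta F N k)^T = - mudelta F N k.
Proof.
rewrite /mudelta linearZ /= trmx_mul trmxX delta2_tr inv_shiftE linearB /= trmxK.
rewrite -scalerN; congr (_ *: _).
rewrite mulmxE (commrX k.-1 comm_md).
by rewrite -mulrN opprB.
Qed.

Lemma deltaev_tr k : (deltaev F N k)^T = deltaev F N k.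
Proof. by rewrite /deltaev trmxX delta2_tr. Qed.

Lemma lag_tr P (r : F) : (lag_mx N P r (-1))^T = lag_mx N P r 1.
Proof.
rewrite /lag_mx linearD /= tr_scalar_mx linear_sum /=; congr (_ + _).
apply: eq_bigr => k _; rewrite linearZ /= linearD /= linearZ /= mudelta_tr deltaev_tr.
by rewrite scalerN -scaleNr !mulNr mul1r opprK.
Qed.
End Lag.


Section Real.
Variable R : realType.
Lemma isr_toC (x : R) : isr (toC x). Proof. by exists x. Qed.
Lemma isr0 : isr (0 : R[i]). Proof. by exists 0. Qed.
Lemma isrD (x y : R[i]) : isr x -> isr y -> isr (x + y).
Proof. by move=> [a ->] [b ->]; exists (a + b); rewrite rmorphD. Qed.
Lemma isrB (x y : R[i]) : isr x -> isr y -> isr (x - y).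
Proof. by move=> [a ->] [b ->]; exists (a - b); rewrite rmorphB. Qed.
Lemma isrM (x y : R[i]) : isr x -> isr y -> isr (x * y).
Proof. by move=> [a ->] [b ->]; exists (a * b); rewrite rmorphM. Qed.
Lemma isrV (x : R[i]) : isr x -> isr (x^-1).
Proof. by move=> [a ->]; exists (a^-1); rewrite fmorphV. Qed.
Lemma isr_nat n : isr (n%:R : R[i]).
Proof. by exists n%:R; rewrite rmorph_nat. Qed.
Lemma isr_sum (I : finType) (F : I -> R[i]) : (forall i, isr (F i)) -> isr (\sum_i F i).
Proof.
by move=> h; apply: big_ind => //; [exact: isr0 | exact: isrD].
Qed.
Lemma isrE (x : R[i]) : isr x -> x = toC (complex.Re x).
Proof. by move=> [a ->]. Qed.

Lemma icoef_sym (m : interp) N (H r : R) (I K : 'I_N) : interp_ok m ->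
  icoef m H r (-1) I K = icoef m H r 1 K I.
Proof.
case: m => [s|P] /= => [[us cs]|_]; first exact: spec_sym.
by rewrite -lag_tr [in RHS]mxE.
Qed.

Lemma icoef_real (m : interp) N (H r sgn : R) (I K : 'I_N) : interp_ok m ->
  isr (icoef m H r sgn I K).
Proof.
case: m => [s|P] /= => [[us cs]|_]; first exact: spec_real.
exact: isr_toC.
Qed.
End Real.


Section Main.
Variables (R : realType) (Nx Ny nx ny : nat) (dx dy Hx Hy : R)
  (mx my : interp) (kx ky : 'I_Nx -> 'I_Ny -> nat -> nat -> R).

Local Notation P := (pidx Nx Ny nx ny).
Definition dlt (s : P) : P -> R[i] := fun x => (x == s)%:R.
Local Notation uv := (@uval R Nx Ny nx ny).
Local Notation ue := (uext dx dy Hx Hy mx my).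

Lemma uvalE u I J i j (hi : (i < nx)%N) (hj : (j < ny)%N) :
  uv u I J i.+1 j.+1 = u (I, J, Ordinal hi, Ordinal hj).
Proof.
rewrite /uval /=; case: insubP => [a _ ea|]; last by rewrite hi.
case: insubP => [b _ eb|]; last by rewrite hj.
by congr u; congr (_, _, _); apply: val_inj.
Qed.

Lemma uval_lin u I J i j : uv u I J i j = \sum_s u s * uv (dlt s) I J i j.
Proof.
rewrite /uval; case: ifP => _; last by rewrite big1 // => s _; rewrite mulr0.
case: insub => [a|]; last by rewrite big1 // => s _; rewrite mulr0.
case: insub => [b|]; last by rewrite big1 // => s _; rewrite mulr0.
rewrite (bigD1 (I, J, a, b)) //= /dlt eqxx mulr1 big1 ?addr0 // => s /negbTE.
by rewrite eq_sym => ->; rewrite mulr0.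
Qed.

Lemma sum_lin (N : nat) (c : 'I_N -> R[i]) (f : 'I_N -> (P -> R[i]) -> R[i]) u :
  (forall K u, f K u = \sum_s u s * f K (dlt s)) ->
  \sum_K c K * f K u = \sum_s u s * \sum_K c K * f K (dlt s).
Proof.
move=> h; under eq_bigr do rewrite h mulr_sumr.
rewrite exchange_big /=; apply: eq_bigr => s _; rewrite mulr_sumr.
by apply: eq_bigr => K _; rewrite mulrCA.
Qed.

Lemma uext_lin u I J i j : ue u I J i j = \sum_s u s * ue (dlt s) I J i j.
Proof.
rewrite /uext; case: ifP => _.
  by apply: (@sum_lin _ _ (fun K v => uv v K J nx j)) => K v; rewrite uval_lin.
case: ifP => _.
  by apply: (@sum_lin _ _ (fun K v => uv v K J 1 j)) => K v; rewrite uval_lin.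
case: ifP => _.
  by apply: (@sum_lin _ _ (fun K v => uv v I K i ny)) => K v; rewrite uval_lin.
case: ifP => _.
  by apply: (@sum_lin _ _ (fun K v => uv v I K i 1)) => K v; rewrite uval_lin.
exact: uval_lin.
Qed.

Lemma rhs_lin u t : patch_rhs dx dy Hx Hy mx my kx ky u t =
  \sum_s u s * patch_rhs dx dy Hx Hy mx my kx ky (dlt s) t.
Proof.
rewrite /patch_rhs /= !(uext_lin u).
rewrite -!sumrB !mulr_sumr -!big_split /= !mulr_suml -big_split /=.
apply: eq_bigr => s _; ring.
Qed.


Lemma uvalG u I J i j (hi : (i.-1 < nx)%N) (hj : (j.-1 < ny)%N) :
  (0 < i)%N -> (0 < j)%N -> uv u I J i j = u (I, J, Ordinal hi, Ordinal hj).
Proof.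
move=> i0 j0; rewrite /uval i0 j0 /=; case: insubP => [a _ ea|]; last by rewrite hi.
case: insubP => [b _ eb|]; last by rewrite hj.
by congr u; congr (_, _, _); apply: val_inj.
Qed.

Lemma uvalO u I J (a : 'I_nx) (b : 'I_ny) : uv u I J a.+1 b.+1 = u (I, J, a, b).
Proof. by rewrite (uvalG u I J a.+1 b.+1 (ltn_ord a) (ltn_ord b)) //; congr u; congr (_,_,_); apply: val_inj. Qed.

Lemma sumx_dlt (c : 'I_Nx -> R[i]) J o b K J' a' b' :
 \sum_K0 c K0 * dlt (K, J', a', b') (K0, J, o, b) = c K * ((J == J') && (o == a') && (b == b'))%:R.
Proof.
rewrite (bigD1 K) //= big1 ?addr0; first by rewrite /dlt !xpair_eqE eqxx.
by move=> K0 /negbTE ne; rewrite /dlt !xpair_eqE ne /= mulr0.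
Qed.

Lemma sumy_dlt (c : 'I_Ny -> R[i]) I o b K J' a' b' :
 \sum_K0 c K0 * dlt (K, J', a', b') (I, K0, o, b) = c J' * ((I == K) && (o == a') && (b == b'))%:R.
Proof.
rewrite (bigD1 J') //= big1 ?addr0; first by rewrite /dlt !xpair_eqE eqxx andbT.
by move=> K0 /negbTE ne; rewrite /dlt !xpair_eqE ne /= andbF mulr0.
Qed.

Lemma XR (nx0 : (0 < nx)%N)
  (hk : forall (I K : 'I_Nx) (J : 'I_Ny) (j : nat), (0 < j <= ny)%N -> kx I J 0%N j = kx K J nx j)
  (hm : interp_ok mx) I K J J' (a a' : 'I_nx) (b b' : 'I_ny) :
  toC (kx I J a.+1 b.+1) * ue (dlt (K, J', a', b')) I J a.+2 b.+1 =
  toC (kx K J' a' b'.+1) * ue (dlt (I, J, a, b)) K J' a' b'.+1.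
Proof.
have hb := ltn_ord b; have hb' := ltn_ord b'.
have ha := ltn_ord a; have ha' := ltn_ord a'.
have e1 : ((a' : nat) == nx.+1) = false by apply/eqP; lia.
rewrite /uext /= hb hb' /= !andbT !eqSS (ltn_eqF hb) (ltn_eqF hb') /= e1.
have hn : (nx.-1 < nx)%N by lia.
case: (eqVneq (a : nat).+1 nx) => ea.
- under eq_bigr => K0 _ do rewrite (uvalG _ K0 J 1 b.+1 nx0 hb) //.
  rewrite sumx_dlt.
  case: a' ha' e1 => [[|a''] hp] ha' e1 /=.
  + under eq_bigr => K0 _ do rewrite (uvalG _ K0 J' nx b'.+1 hn hb') //.
    rewrite sumx_dlt -!val_eqE /= (icoef_sym _ _ _ _ _ _ _ hm).
    have -> : kx I J a.+1 b.+1 = kx K J 0 b.+1 by rewrite ea (hk K I) //.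
    have -> : (nx.-1 == a) = true by apply/eqP; lia.
    rewrite eqxx andbT [(J' : nat) == _]eq_sym [(b' : nat) == _]eq_sym.
    case: eqP => [/val_inj <-|_]; last by rewrite /= !mulr0.
    by case: eqP => [/val_inj ->|]; rewrite /= ?mulr0.
  + rewrite (uvalG _ K J' a''.+1 b'.+1 (ltnW hp) hb') // /dlt !xpair_eqE -!val_eqE /=.
    have -> : (a'' == a) = false by apply/eqP; lia.
    by rewrite !andbF !andFb /= !mulr0.
- have hp1 : ((a : nat).+1 < nx)%N by rewrite ltn_neqAle ea ha.
  rewrite (uvalG _ I J a.+2 b.+1 hp1 hb) //.
  case: a' ha' e1 => [[|a''] hp] ha' e1 /=.
  + under eq_bigr => K0 _ do rewrite (uvalG _ K0 J' nx b'.+1 hn hb') //.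
    rewrite sumx_dlt /dlt !xpair_eqE -!val_eqE /=.
    have -> : (nx.-1 == a) = false by apply/eqP; lia.
    by rewrite !andbF !andFb /= !mulr0.
  + rewrite (uvalG _ K J' a''.+1 b'.+1 (ltnW hp) hb') // /dlt !xpair_eqE -!val_eqE /= eqSS.
    rewrite [(K:nat) == _]eq_sym [(J':nat) == _]eq_sym [(a'':nat) == _]eq_sym [(b':nat) == _]eq_sym.
    case: eqP => [/val_inj ei|]; last by rewrite /= !mulr0.
    case: eqP => [/val_inj ej|]; last by rewrite /= !mulr0.
    case: eqP => [ea'|]; last by rewrite /= !mulr0.
    case: eqP => [/val_inj eb|]; last by rewrite /= !mulr0.
    by rewrite -ei -ej -ea' -eb.
Qed.

Lemma YR (ny0 : (0 < ny)%N)
  (hk : forall (I : 'I_Nx) (J K : 'I_Ny) (i : nat), (0 < i <= nx)%N -> ky I J i 0%N = ky I K i ny)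
  (hm : interp_ok my) I K J J' (a a' : 'I_nx) (b b' : 'I_ny) :
  toC (ky I J a.+1 b.+1) * ue (dlt (K, J', a', b')) I J a.+1 b.+2 =
  toC (ky K J' a'.+1 b') * ue (dlt (I, J, a, b)) K J' a'.+1 b'.
Proof.
have hb := ltn_ord b; have hb' := ltn_ord b'.
have ha := ltn_ord a; have ha' := ltn_ord a'.
have e1 : ((b' : nat) == ny.+1) = false by apply/eqP; lia.
rewrite /uext /= ha ha' /= !andbT !eqSS (ltn_eqF ha) (ltn_eqF ha') /= e1.
have hn : (ny.-1 < ny)%N by lia.
case: (eqVneq (b : nat).+1 ny) => eb.
- under eq_bigr => K0 _ do rewrite (uvalG _ I K0 a.+1 1 ha ny0) //.
  rewrite sumy_dlt.
  case: b' hb' e1 => [[|b''] hp] hb' e1 /=.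
  + under eq_bigr => K0 _ do rewrite (uvalG _ K K0 a'.+1 ny ha' hn) //.
    rewrite sumy_dlt -!val_eqE /= (icoef_sym _ _ _ _ _ _ _ hm).
    have -> : ky I J a.+1 b.+1 = ky I J' a.+1 0 by rewrite eb (hk I J' J) //.
    have -> : (ny.-1 == b) = true by apply/eqP; lia.
    rewrite eqxx !andbT [(K : nat) == _]eq_sym [(a' : nat) == _]eq_sym.
    case: eqP => [/val_inj <-|_]; last by rewrite /= !mulr0.
    by case: eqP => [/val_inj ->|]; rewrite /= ?mulr0.
  + rewrite (uvalG _ K J' a'.+1 b''.+1 ha' (ltnW hp)) // /dlt !xpair_eqE -!val_eqE /=.
    have -> : (b'' == b) = false by apply/eqP; lia.
    by rewrite !andbF /= !mulr0.
- have hp1 : ((b : nat).+1 < ny)%N by rewrite ltn_neqAle eb hb.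
  rewrite (uvalG _ I J a.+1 b.+2 ha hp1) //.
  case: b' hb' e1 => [[|b''] hp] hb' e1 /=.
  + under eq_bigr => K0 _ do rewrite (uvalG _ K K0 a'.+1 ny ha' hn) //.
    rewrite sumy_dlt /dlt !xpair_eqE -!val_eqE /=.
    have -> : (ny.-1 == b) = false by apply/eqP; lia.
    by rewrite !andbF /= !mulr0.
  + rewrite (uvalG _ K J' a'.+1 b''.+1 ha' (ltnW hp)) // /dlt !xpair_eqE -!val_eqE /= eqSS.
    rewrite [(K:nat) == _]eq_sym [(J':nat) == _]eq_sym [(a':nat) == _]eq_sym [(b'':nat) == _]eq_sym.
    case: eqP => [/val_inj ei|]; last by rewrite /= !mulr0.
    case: eqP => [/val_inj ej|]; last by rewrite /= !mulr0.
    case: eqP => [/val_inj ea'|]; last by rewrite /= !mulr0.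
    case: eqP => [eb'|]; last by rewrite /= !mulr0.
    by rewrite -ei -ej -ea' -eb'.
Qed.

Lemma e0 (u : P -> R[i]) I J (a : 'I_nx) (b : 'I_ny) : ue u I J a.+1 b.+1 = u (I, J, a, b).
Proof.
have ha := ltn_ord a; have hb := ltn_ord b.
rewrite /uext /= !eqSS (ltn_eqF ha) (ltn_eqF hb) /=.
exact: uvalO.
Qed.

Lemma uval_real s I J i j : isr (uv (dlt s) I J i j).
Proof.
rewrite /uval; case: ifP => _; last exact: isr0.
case: insub => [a|]; last exact: isr0.
case: insub => [b|]; last exact: isr0.
exact: isr_nat.
Qed.

Lemma uext_real (hmx : interp_ok mx) (hmy : interp_ok my) s I J i j :
  isr (ue (dlt s) I J i j).
Proof.
rewrite /uext.
case: ifP => _.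
  by apply: isr_sum => K; apply: isrM; [exact: icoef_real | exact: uval_real].
case: ifP => _.
  by apply: isr_sum => K; apply: isrM; [exact: icoef_real | exact: uval_real].
case: ifP => _.
  by apply: isr_sum => K; apply: isrM; [exact: icoef_real | exact: uval_real].
case: ifP => _.
  by apply: isr_sum => K; apply: isrM; [exact: icoef_real | exact: uval_real].
exact: uval_real.
Qed.

Lemma isrN (x : R[i]) : isr x -> isr (- x).
Proof. by move=> [a ->]; exists (- a); rewrite rmorphN. Qed.

Lemma M_real (hmx : interp_ok mx) (hmy : interp_ok my) s t :
  isr (patch_rhs dx dy Hx Hy mx my kx ky (dlt s) t).
Proof.
rewrite /patch_rhs /=.
have U := uext_real hmx hmy s.
have T := @isr_toC R.
repeat first [apply: isrD | apply: isrN | apply: isrM | apply: isrB | apply: isrV | exact: U | exact: T].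
Qed.

Lemma M_sym (nx0 : (0 < nx)%N) (ny0 : (0 < ny)%N)
  (hmx : interp_ok mx) (hmy : interp_ok my)
  (hkx : forall (I K : 'I_Nx) (J : 'I_Ny) (j : nat), (0 < j <= ny)%N -> kx I J 0%N j = kx K J nx j)
  (hky : forall (I : 'I_Nx) (J K : 'I_Ny) (i : nat), (0 < i <= nx)%N -> ky I J i 0%N = ky I K i ny)
  t s : patch_rhs dx dy Hx Hy mx my kx ky (dlt s) t = patch_rhs dx dy Hx Hy mx my kx ky (dlt t) s.
Proof.
case: (eqVneq t s) => [->//|ne].
move: ne; case: t => [[[I J] a] b]; case: s => [[[K J'] a'] b'] ne.
rewrite /patch_rhs /= !e0.
have z1 : dlt (K, J', a', b') (I, J, a, b) = 0 by rewrite /dlt (negbTE ne).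
have z2 : dlt (I, J, a, b) (K, J', a', b') = 0 by rewrite /dlt eq_sym (negbTE ne).
rewrite z1 z2 !subr0.
rewrite (XR nx0 hkx hmx I K J J' a a' b b') (XR nx0 hkx hmx K I J' J a' a b' b).
rewrite (YR ny0 hky hmy I K J J' a a' b b') (YR ny0 hky hmy K I J' J a' a b' b).
ring.
Qed.
End Main.


Theorem corollary7 (R : realType) (Nx Ny nx ny : nat) (dx dy Hx Hy : R)
    (mx my : interp) (kx ky : 'I_Nx -> 'I_Ny -> nat -> nat -> R) :
  (0 < nx)%N -> (0 < ny)%N -> 0 < dx -> 0 < dy -> 0 < Hx -> 0 < Hy ->
  interp_ok mx -> interp_ok my ->
  (forall (I K : 'I_Nx) (J : 'I_Ny) (j : nat), (0 < j <= ny)%N ->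
     kx I J 0%N j = kx K J nx j) ->
  (forall (I : 'I_Nx) (J K : 'I_Ny) (i : nat), (0 < i <= nx)%N ->
     ky I J i 0%N = ky I K i ny) ->
  exists L : pidx Nx Ny nx ny -> pidx Nx Ny nx ny -> R,
    (forall (u : pidx Nx Ny nx ny -> R[i]) (t : pidx Nx Ny nx ny),
       patch_rhs dx dy Hx Hy mx my kx ky u t = \sum_s toC (L t s) * u s) /\
    (forall t s, L t s = L s t).
Proof.
move=> nx0 ny0 _ _ _ _ hmx hmy hkx hky.
exists (fun t s => complex.Re (patch_rhs dx dy Hx Hy mx my kx ky (@dlt R Nx Ny nx ny s) t)).
split.
- move=> u t; rewrite rhs_lin; apply: eq_bigr => s _.
  by rewrite mulrC -isrE //; apply: M_real.
- move=> t s; congr complex.Re; exact: M_sym.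
Qed.
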